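(* Assume (A1)–(A3) and $\mu_u,\mu_v>0$. Let $E=(u,v)$ with $u,v\gg 0$ be a positive equilibrium of system (M), and let $J$ be the Jacobian of the right-hand side of (M) at $E$, i.e. $$J=\begin{pmatrix}\mu_uL+\mathrm{diag}(p_i-2u_i-cv_i) & -\mathrm{diag}(cu_i)\\ -\mathrm{diag}(bv_i) & \mu_vL+\mathrm{diag}(q_i-bu_i-2v_i)\end{pmatrix}.$$ Then the spectral bound $s(J)=\max\{\mathrm{Re}\,\lambda:\lambda\in\sigma(J)\}$ satisfies $s(J)<0$ (so $E$ is locally asymptotically stable), except in the case $bc=1$ and $w^*(\mu_u,p)=c\,w^*(\mu_v,q)$, in which case $s(J)=0$ ($E$ is linearly neutrally stable).
   Context: Let $n\ge2$ and $A=(a_{ij})_{n\times n}$ with $a_{ij}\ge 0$ for $i\ne j$. The connection matrix $L=(L_{ij})$ is given by $L_{ij}=a_{ij}$ for $i\ne j$ and $L_{ii}=-\sum_{k\ne i}a_{ki}$. System (M) is the two-species competition patch model $$u_i'=\mu_u\sum_{j=1}^nL_{ij}u_j+u_i(p_i-u_i-cv_i),\qquad v_i'=\mu_v\sum_{j=1}^nL_{ij}v_j+v_i(q_i-bu_i-v_i),\qquad i=1,\dots,n,$$ with $p=(p_i)$, $q=(q_i)$. The weighted digraph $\mathcal G$ associated with $A$ has vertex set $\{1,\dots,n\}$ and, for $i\ne j$, an arc $(i,j)$ iff $a_{ji}>0$, with weight $a_{ji}$. A cycle $\mathcal C$ is a list of distinct vertices $i_1,\dots,i_k$, $k\ge2$,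 with arcs $(i_m,i_{m+1})$, $m<k$, and $(i_k,i_1)$; $w(\mathcal C)$ is the product of its arc weights; $-\mathcal C$ is the cycle with all arcs reversed. $\mathcal G$ is cycle-balanced if for every cycle $\mathcal C$, $-\mathcal C$ is also a cycle of $\mathcal G$ and $w(\mathcal C)=w(-\mathcal C)$. Standing assumptions: (A1) $b,c>0$, $bc\le 1$, and $p_i,q_i>0$ for all $i$; (A2) $L$ is irreducible; (A3) $\mathcal G$ is cycle-balanced. For $\mu>0$ and $r\gg0$, $w^*(\mu,r)\gg0$ denotes the unique positive equilibrium of the single-species model $w_i'=\mu\sum_jL_{ij}w_j+w_i(r_i-w_i)$ (which exists and is globally asymptotically stable in $\mathbb R^n_+\setminus\{0\}$ when $L$ is irreducible). For vectors, $u\gg0$ means all entries positive. *)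

(* Defs.v *)
From mathcomp Require Import all_boot all_algebra complex reals.
Set Implicit Arguments. Unset Strict Implicit. Unset Printing Implicit Defensive.
Import GRing.Theory Num.Theory.
Local Open Scope ring_scope.

Section PatchModel.
Variables (R : realType) (n : nat).

Definition connL (A : 'M[R]_n) : 'M[R]_n :=
  \matrix_(i, j) (if i == j then - \sum_(k < n | k != i) A k i else A i j).

Definition offdiag_nonneg (A : 'M[R]_n) : Prop :=
  forall i j : 'I_n, i != j -> 0 <= A i j.

(* Irreducible matrix: there is no nonempty proper subset S of indices
   with M_ij = 0 for all i in S, j not in S (i.e. M is not permutation-similar
   to a block-triangular matrix). *)
Definition irreducible_mx (M : 'M[R]_n) : Prop :=
  ~ exists S : {set 'I_n}, [/\ S != set0, S != setT &
       forall i j, i \in S -> j \notin S -> M i j = 0].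

(* The weighted digraph G of A: arc (i,j) iff i <> j and a_ji > 0,
   with weight a_ji. *)
Definition arc (A : 'M[R]_n) : rel 'I_n := fun i j => (i != j) && (0 < A j i).

Definition is_graph_cycle (A : 'M[R]_n) (s : seq 'I_n) : bool :=
  [&& uniq s, (2 <= size s)%N & path.cycle (arc A) s].

Definition cycle_weight (A : 'M[R]_n) (s : seq 'I_n) : R :=
  \prod_(e <- zip s (rot 1 s)) A e.2 e.1.

(* -C is the cycle traversed backwards, i.e. the list rev s. *)
Definition cycle_balanced (A : 'M[R]_n) : Prop :=
  forall s, is_graph_cycle A s ->
    is_graph_cycle A (rev s) /\ cycle_weight A s = cycle_weight A (rev s).

Definition single_pos_equilibrium (L : 'M[R]_n) (mu : R) (r w : 'I_n -> R)
  : Prop :=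
  (forall i, 0 < w i) /\
  (forall i, mu * (\sum_j L i j * w j) + w i * (r i - w i) = 0).

Definition M_equilibrium (L : 'M[R]_n) (mu_u mu_v b c : R)
  (p q u v : 'I_n -> R) : Prop :=
  forall i,
    mu_u * (\sum_j L i j * u j) + u i * (p i - u i - c * v i) = 0 /\
    mu_v * (\sum_j L i j * v j) + v i * (q i - b * u i - v i) = 0.

Definition jacobianM (L : 'M[R]_n) (mu_u mu_v b c : R)
  (p q u v : 'I_n -> R) : 'M[R]_(n + n) :=
  block_mx
    (mu_u *: L + diag_mx (\row_i (p i - 2 * u i - c * v i)))
    (- diag_mx (\row_i (c * u i)))
    (- diag_mx (\row_i (b * v i)))
    (mu_v *: L + diag_mx (\row_i (q i - b * u i - 2 * v i))).

End PatchModel.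

Definition is_spectral_bound (R : realType) (m : nat) (J : 'M[R]_m) (s : R)
  : Prop :=
  (exists2 l : R[i], eigenvalue (map_mx (@real_complex R) J) l & complex.Re l = s)
  /\ (forall l : R[i], eigenvalue (map_mx (@real_complex R) J) l ->
        complex.Re l <= s).

(* Main.v *)
Require Import Defs.
From mathcomp Require Import all_boot all_order all_algebra complex reals.
From mathcomp Require Import ring lra zify.
Import Order.TTheory GRing.Theory Num.Theory.
Local Open Scope ring_scope.
Set Implicit Arguments. Unset Strict Implicit.

Lemma div_cross (K : fieldType) (bi aij fi bj aji fj : K) : fi != 0 -> fj != 0 ->
  bi * aij * fj = bj * aji * fi -> bi / fi * aij = bj / fj * aji.
Proof.
move=> H1 H2 H.
have -> : bi / fi * aij = (bi * aij * fj) / (fi * fj) by field; rewrite H1 H2.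
have -> : bj / fj * aji = (bj * aji * fi) / (fi * fj) by field; rewrite H1 H2.
by rewrite H.
Qed.

Section Graph.
Variables (R : realType) (n : nat) (A : 'M[R]_n).
Hypothesis Hoff : offdiag_nonneg A.
Hypothesis Hirr : irreducible_mx (connL A).
Hypothesis Hbal : cycle_balanced A.

Fixpoint wf (x : 'I_n) (s : seq 'I_n) : R :=
  if s is y :: s' then A y x * wf y s' else 1.
Fixpoint wb (x : 'I_n) (s : seq 'I_n) : R :=
  if s is y :: s' then A x y * wb y s' else 1.

Lemma wf_cat x s1 s2 : wf x (s1 ++ s2) = wf x s1 * wf (last x s1) s2.
Proof. by elim: s1 x => [|y s1 IH] x /=; rewrite ?mul1r // IH mulrA. Qed.
Lemma wb_cat x s1 s2 : wb x (s1 ++ s2) = wb x s1 * wb (last x s1) s2.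
Proof. by elim: s1 x => [|y s1 IH] x /=; rewrite ?mul1r // IH mulrA. Qed.

Lemma wf_rcons x s z : wf x (rcons s z) = wf x s * A z (last x s).
Proof. by rewrite -cats1 wf_cat /= mulr1. Qed.

Lemma cw_zip y t z :
  \prod_(e <- zip (y :: t) (rcons t z)) A e.2 e.1 = wf y t * A z (last y t).
Proof.
elim: t y => [|w t IH] y /=; first by rewrite big_cons big_nil mulr1 mul1r.
by rewrite big_cons /= IH mulrA.
Qed.

Lemma cw_eq y t : cycle_weight A (y :: t) = wf y t * A y (last y t).
Proof. by rewrite /cycle_weight rot1_cons cw_zip. Qed.

Lemma wf_rev a t b : wf a (rcons (rev t) b) = wb b (rcons t a).
Proof.
elim: t b => [|w t IH] b /=; first by rewrite mulr1.
by rewrite rev_cons wf_rcons IH last_rcons mulrC.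
Qed.

Lemma arc_neq i j : Defs.arc A i j -> i != j.
Proof. by case/andP. Qed.

Lemma wf_pos x s : path (Defs.arc A) x s -> 0 < wf x s.
Proof.
elim: s x => [|y s IH] x /=; first by rewrite ltr01.
by case/andP => /andP [_ Hp] Hs; rewrite mulr_gt0 // IH.
Qed.

Lemma wb_ge0 x s : path (Defs.arc A) x s -> 0 <= wb x s.
Proof.
elim: s x => [|y s IH] x /=; first by rewrite ler01.
case/andP => /andP [Hne _] Hs; rewrite mulr_ge0 // ?IH //.
by apply: Hoff.
Qed.

Lemma not_uniq_split (T : eqType) (s : seq T) : ~~ uniq s ->
  exists s1 z s2 s3, s = rcons s1 z ++ rcons s2 z ++ s3.
Proof.
elim: s => [|a s IH] //=; rewrite negb_and negbK; case/orP.
  case/splitPr => s2 s3; exists [::], a, s2, s3.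
  by rewrite /= cat_rcons.
move/IH => [s1 [z [s2 [s3 ->]]]]; exists (a :: s1), z, s2, s3.
by [].
Qed.

Lemma closed_walk s x : path (Defs.arc A) x s -> last x s = x -> wf x s = wb x s.
Proof.
elim: {s}(size s).+1 {-2}s x (ltnSn (size s)) => // N IH s x Hsz Hp Hl.
case: (boolP (uniq s)) => Hu.
  case: s Hsz Hp Hl Hu => [|y t] //= Hsz Hp Hl Hu.
  case/lastP: t Hsz Hp Hl Hu => [|t' z] Hsz Hp Hl Hu.
    move: Hp Hl => /= /andP [Ha _] Hyx; subst y.
    by move: (arc_neq Ha); rewrite eqxx.
  move: Hl; rewrite last_rcons => Hz; subst z.
  have Hc : is_graph_cycle A (y :: rcons t' x).
    apply/and3P; split => //; first by rewrite /= size_rcons.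
    rewrite /path.cycle rcons_path last_rcons.
    by move: Hp => /= /andP [-> ->].
  have [_ Hw] := Hbal Hc.
  move: Hw; rewrite cw_eq last_rcons rev_cons rev_rcons cw_eq.
  rewrite -/(rcons (rev t') y) wf_rev !last_rcons /= => Hw.
  by rewrite mulrC Hw mulrC.
have [s1 [z [s2 [s3 Hs]]]] := not_uniq_split Hu; subst s.
move: Hp; rewrite cat_path last_rcons cat_path last_rcons => /and3P [H1 H2 H3].
move: Hl; rewrite !last_cat !last_rcons => Hl.
move: Hsz; rewrite !size_cat !size_rcons => Hsz.
have Hin : wf z (rcons s2 z) = wb z (rcons s2 z).
  apply: IH => //; last by rewrite last_rcons.
  rewrite size_rcons; lia.
have Hout : wf x (rcons s1 z ++ s3) = wb x (rcons s1 z ++ s3).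
  apply: IH.
  - rewrite size_cat size_rcons; lia.
  - by rewrite cat_path last_rcons H1 H3.
  - by rewrite last_cat last_rcons.
move: Hout; rewrite !wf_cat !wb_cat !last_rcons Hin => Hout.
by rewrite [LHS]mulrCA Hout mulrCA.
Qed.


Lemma connL_off i j : i != j -> connL A i j = A i j.
Proof. by move=> H; rewrite /connL mxE (negbTE H). Qed.

Lemma A_eq0_or_pos i j : i != j -> A i j = 0 \/ 0 < A i j.
Proof.
by move=> H; have := Hoff H; rewrite le_eqVlt => /orP [/eqP <-|->]; [left|right].
Qed.

Lemma const_edges (f : 'I_n -> R) :
  (forall i j, i != j -> 0 < A i j -> f i = f j) -> forall i j, f i = f j.
Proof.
move=> Hf i j; apply/eqP; apply: contraT => Hne; exfalso.
apply: Hirr; exists [set k | f k == f i]; split.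
- by apply/set0Pn; exists i; rewrite inE.
- apply/negP => /eqP HS; move: Hne.
  have : j \in [set k | f k == f i] by rewrite HS inE.
  by rewrite inE => /eqP ->; rewrite eqxx.
- move=> a b; rewrite !inE => Ha Hb.
  have Hab : a != b by apply: contraNneq Hb => <-.
  rewrite connL_off //; case: (A_eq0_or_pos Hab) => // Hp.
  by move: Hb; rewrite -(Hf _ _ Hab Hp) Ha.
Qed.

Lemma reach i j : connect (Defs.arc A) i j.
Proof.
apply: contraT => Hne; exfalso.
apply: Hirr; exists (~: [set k | connect (Defs.arc A) i k]); split.
- by apply/set0Pn; exists j; rewrite !inE.
- apply/negP => /eqP HS.
  have : i \in ~: [set k | connect (Defs.arc A) i k] by rewrite HS inE.
  by rewrite !inE connect0.
- move=> a b; rewrite !inE negbK => Ha Hb.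
  have Hab : a != b by apply: contraNneq Ha => ->.
  rewrite connL_off //; case: (A_eq0_or_pos Hab) => // Hp.
  move: Ha; rewrite (connect_trans Hb) //; apply: connect1.
  by rewrite /Defs.arc eq_sym Hab Hp.
Qed.

Lemma theta_ex (r : 'I_n) : exists th : 'I_n -> R,
  (forall i, 0 < th i) /\ (forall i j, th i * A i j = th j * A j i).
Proof.
have [p Hp] : exists p : 'I_n -> seq 'I_n,
    forall k, path (Defs.arc A) r (p k) /\ k = last r (p k).
  apply: (@fin_all_exists _ (fun=> seq 'I_n)
    (fun k s => path (Defs.arc A) r s /\ k = last r s)) => k.
  have /connectP [s H1 H2] := reach r k.
  by exists s.
have [q Hq] : exists q : 'I_n -> seq 'I_n,
    forall k, path (Defs.arc A) k (q k) /\ r = last k (q k).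
  apply: (@fin_all_exists _ (fun=> seq 'I_n)
    (fun k s => path (Defs.arc A) k s /\ r = last k s)) => k.
  have /connectP [s H1 H2] := reach k r.
  by exists s.
pose F k := wf r (p k); pose B k := wb r (p k).
pose Fq k := wf k (q k); pose Bq k := wb k (q k).
have cl k : F k * Fq k = B k * Bq k.
  have [H1 H2] := Hp k; have [H3 H4] := Hq k.
  have := @closed_walk (p k ++ q k) r.
  rewrite cat_path last_cat -H2 H1 H3 -H4 => /(_ erefl erefl).
  by rewrite wf_cat wb_cat -H2.
have Fpos k : 0 < F k by apply: wf_pos; case: (Hp k).
have Fqpos k : 0 < Fq k by apply: wf_pos; case: (Hq k).
have Bpos k : 0 < B k.
  have H : 0 <= B k by apply: wb_ge0; case: (Hp k).
  rewrite lt_def H andbT; apply/eqP => H0.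
  by move: (cl k); rewrite H0 mul0r => /eqP; rewrite mulf_eq0 !gt_eqF.
have Bqnz k : Bq k != 0.
  by apply/eqP => H0; move: (cl k); rewrite H0 mulr0 => /eqP; rewrite mulf_eq0 !gt_eqF.
exists (fun k => B k / F k); split.
  by move=> k; rewrite divr_gt0.
have key i j : Defs.arc A i j -> B i / F i * A i j = B j / F j * A j i.
  move=> Ha.
  have e1 : F i * (A j i * Fq j) = B i * (A i j * Bq j).
    have [H1 H2] := Hp i; have [H3 H4] := Hq j.
    have := @closed_walk (p i ++ j :: q j) r.
    rewrite cat_path last_cat -H2 /= Ha H1 H3 -H4 => /(_ erefl erefl).
    by rewrite wf_cat wb_cat -H2.
  have e2 := cl j.
  have HFi : F i != 0 by rewrite gt_eqF.
  have HFj : F j != 0 by rewrite gt_eqF.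
  have HBq := Bqnz j.
  suff H : B i * A i j * F j * Bq j = B j * A j i * F i * Bq j.
    exact: div_cross HFi HFj (mulIf HBq H).
  transitivity (B i * (A i j * Bq j) * F j); first by ring.
  rewrite -e1.
  transitivity (A j i * F i * (F j * Fq j)); first by ring.
  by rewrite e2; ring.
move=> i j; case: (eqVneq i j) => [->//|Hij].
case: (boolP (0 < A j i)) => Hji; first by apply: key; rewrite /Defs.arc Hij.
case: (boolP (0 < A i j)) => Hij'.
  by symmetry; apply: key; rewrite /Defs.arc eq_sym Hij.
have Hji0 : A j i = 0.
  have Hji' : j != i by rewrite eq_sym.
  by case: (A_eq0_or_pos Hji') => // H; move: Hji; rewrite H.
have Hij0 : A i j = 0 by case: (A_eq0_or_pos Hij) => // H; move: Hij'; rewrite H.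
by rewrite Hji0 Hij0 !mulr0.
Qed.

End Graph.

Ltac nn := match goal with
 | |- is_true (0 <= _ * _) => apply: mulr_ge0; nn
 | |- is_true (0 <= _ ^-1) => rewrite invr_ge0; nn
 | |- is_true (0 <= _ ^+ _) => apply: exprn_ge0; nn
 | |- is_true (0 <= _ + _) => apply: addr_ge0; nn
 | |- _ => first [ done | (apply: ltW; solve [auto]) | solve [auto] ]
 end.

Section Energy.
Variables (R : realType) (n : nat) (A : 'M[R]_n) (th : 'I_n -> R).
Hypothesis Hoff : offdiag_nonneg A.
Hypothesis Hth : forall i, 0 < th i.
Hypothesis Hsym : forall i j, th i * A i j = th j * A j i.

Local Notation L := (connL A).

Lemma thL_sym i j : th i * L i j = th j * L j i.
Proof.
case: (eqVneq i j) => [->//|H].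
by rewrite !connL_off // eq_sym.
Qed.

Lemma thL_ge0 i j : i != j -> 0 <= th i * L i j.
Proof. by move=> H; rewrite connL_off // mulr_ge0 //; [exact: ltW | exact: Hoff H]. Qed.

Definition Dsum (W xi f : 'I_n -> R) :=
  \sum_i th i * W i * f i * (\sum_j L i j * W j * (xi j - xi i)).

Lemma Dsum_sym W xi f : Dsum W xi f *+ 2 =
  \sum_i \sum_j th i * L i j * W i * W j * (xi j - xi i) * (f i - f j).
Proof.
pose G i j := th i * L i j * W i * W j * (xi j - xi i) * f i.
have -> : Dsum W xi f = \sum_i \sum_j G i j.
  apply: eq_bigr => i _; rewrite mulr_sumr; apply: eq_bigr => j _.
  by rewrite /G; ring.
rewrite mulr2n {2}exchange_big -big_split; apply: eq_bigr => i _.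
rewrite -big_split; apply: eq_bigr => j _; rewrite /G.
rewrite -(thL_sym i j); match goal with |- _ ?a ?b = ?c => change (a + b = c) end; ring.
Qed.

Lemma Dsum_le0 W xi f : (forall i, 0 <= W i) ->
  (forall i j, (xi j - xi i) * (f i - f j) <= 0) -> Dsum W xi f <= 0.
Proof.
move=> HW Hf.
suff H : Dsum W xi f *+ 2 <= 0 by move: H; rewrite mulr2n; lra.
rewrite Dsum_sym; apply: sumr_le0 => i _; apply: sumr_le0 => j _.
case: (eqVneq i j) => [->|Hij]; first by rewrite subrr !mulr0 mul0r.
rewrite -[_ * (f i - f j)]mulrA; apply: mulr_ge0_le0 => //.
by apply: mulr_ge0; [apply: mulr_ge0|]; [exact: thL_ge0 | exact: HW | exact: HW].
Qed.

Lemma Dsum_eq0 W xi f : (forall i, 0 < W i) ->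
  (forall i j, (xi j - xi i) * (f i - f j) <= 0) -> Dsum W xi f = 0 ->
  forall i j, i != j -> 0 < A i j -> (xi j - xi i) * (f i - f j) = 0.
Proof.
move=> HW Hf H0 i j Hij Ha.
pose T i j := th i * L i j * W i * W j * ((xi j - xi i) * (f i - f j)).
have HT i' j' : T i' j' <= 0.
  case: (eqVneq i' j') => [->|H]; first by rewrite /T subrr !mul0r mulr0.
  rewrite /T mulr_ge0_le0 //.
  by apply: mulr_ge0; [apply: mulr_ge0|]; [exact: thL_ge0 | exact: ltW | exact: ltW].
have HS : \sum_i \sum_j - T i j = 0.
  have E : \sum_i \sum_j T i j = 0.
    transitivity (Dsum W xi f *+ 2); last by rewrite H0 mul0rn.
    rewrite Dsum_sym; apply: eq_bigr => i' _; apply: eq_bigr => j' _.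
    by rewrite /T; ring.
  rewrite (eq_bigr (fun i => - \sum_j T i j)); first by rewrite sumrN E oppr0.
  by move=> i' _; rewrite sumrN.
have Hi : \sum_j - T i j = 0.
  apply: (psumr_eq0P _ HS) => // i' _; apply: sumr_ge0 => j' _.
  by rewrite oppr_ge0.
have Hij' : - T i j = 0.
  by apply: (psumr_eq0P _ Hi) => // j' _; rewrite oppr_ge0.
move/eqP: Hij'; rewrite oppr_eq0 /T mulf_eq0 => /orP [|/eqP //].
rewrite !mulf_eq0 connL_off // !gt_eqF ?HW ?Hth //.
Qed.

Lemma Dsum_const W xi k : Dsum W xi (fun=> k) = 0.
Proof.
have := Dsum_sym W xi (fun=> k).
rewrite (eq_bigr (fun=> 0)); last first.
  by move=> i _; rewrite big1 // => j _; rewrite subrr mulr0.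
by rewrite big1 // mulr2n => H; lra.
Qed.


Lemma species_ineq (m e sg : R) (w g rr tt : 'I_n -> R) :
  (forall i, 0 < w i) -> (forall i, 0 <= rr i) ->
  (forall i, m * (\sum_j L i j * w j) + w i * g i = 0) ->
  (forall i, sg * rr i <= m * (\sum_j L i j * rr j) + (g i - w i) * rr i
                          + e * w i * tt i) ->
  sg * (\sum_i th i * (rr i ^+ 3 / w i)) <=
  m * Dsum w (fun i => rr i / w i) (fun i => (rr i / w i) ^+ 2)
  + \sum_i th i * (e * rr i ^+ 2 * tt i - rr i ^+ 3).
Proof.
move=> Hw Hr Heq HI.
have Hnz k : w k != 0 by rewrite gt_eqF.
have Hs i : \sum_j L i j * w j * (rr j / w j - rr i / w i) =
    \sum_j L i j * rr j - rr i / w i * \sum_j L i j * w j.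
  rewrite mulr_sumr -sumrB; apply: eq_bigr => j _.
  by field; rewrite !Hnz.
rewrite /Dsum mulr_sumr [m * _]mulr_sumr -big_split /=; apply: ler_sum => i _.
rewrite Hs.
have Hwi : w i != 0 by rewrite gt_eqF.
set SLr := \sum_j L i j * rr j; set SLw := \sum_j L i j * w j.
have E : m * (th i * w i * (rr i / w i) ^+ 2 * (SLr - rr i / w i * SLw))
    + th i * (e * rr i ^+ 2 * tt i - rr i ^+ 3) =
    th i * (rr i ^+ 2 / w i) * (m * SLr + (g i - w i) * rr i + e * w i * tt i)
    - th i * (rr i ^+ 3 / w i ^+ 2) * (m * SLw + w i * g i).
  by field; rewrite !Hnz.
rewrite E Heq mulr0 subr0.
have -> : sg * (th i * (rr i ^+ 3 / w i)) =
    th i * (rr i ^+ 2 / w i) * (sg * rr i) by field; rewrite !Hnz.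
apply: ler_wpM2l; last exact: HI.
by apply: mulr_ge0; [exact: ltW | apply: divr_ge0; [exact: sqr_ge0 | exact: ltW]].
Qed.


Hypothesis Hirr : irreducible_mx (connL A).
Variables (b c mu mv : R) (p q u v : 'I_n -> R).
Hypotheses (Hb : 0 < b) (Hc : 0 < c) (Hbc : b * c <= 1).
Hypotheses (Hmu : 0 < mu) (Hmv : 0 < mv).
Hypotheses (Hu : forall i, 0 < u i) (Hv : forall i, 0 < v i).
Hypothesis Heq : M_equilibrium (connL A) mu mv b c p q u v.

Lemma sq_cond (x y : R) : 0 <= x -> 0 <= y -> (y - x) * (x ^+ 2 - y ^+ 2) <= 0.
Proof.
move=> Hx Hy.
have -> : (y - x) * (x ^+ 2 - y ^+ 2) = - ((x - y) ^+ 2 * (x + y)) by ring.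
by rewrite oppr_le0 mulr_ge0 ?sqr_ge0 ?addr_ge0.
Qed.

Lemma sq_cond_eq (x y : R) : 0 <= x -> 0 <= y -> (y - x) * (x ^+ 2 - y ^+ 2) = 0 -> x = y.
Proof.
move=> Hx Hy.
have -> : (y - x) * (x ^+ 2 - y ^+ 2) = - ((x - y) ^+ 2 * (x + y)) by ring.
move/eqP; rewrite oppr_eq0 mulf_eq0 sqrf_eq0 subr_eq0 => /orP [/eqP //|].
rewrite paddr_eq0 // => /andP [/eqP -> /eqP ->] //.
Qed.

Lemma ratio_const (r w : 'I_n -> R) :
  (forall i, 0 < w i) -> (forall i, 0 <= r i) ->
  Dsum w (fun i => r i / w i) (fun i => (r i / w i) ^+ 2) = 0 ->
  forall i j, r i / w i = r j / w j.
Proof.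
move=> Hw Hr HD.
have Hx k : 0 <= r k / w k by nn.
apply: (const_edges Hoff Hirr) => i j Hij Ha.
apply: sq_cond_eq => //.
apply: (Dsum_eq0 Hw _ HD Hij Ha) => i' j'.
exact: sq_cond.
Qed.

Lemma core_real (sg : R) (r t : 'I_n -> R) :
  (forall i, 0 <= r i) -> (forall i, 0 <= t i) ->
  (exists i, r i != 0 \/ t i != 0) ->
  (forall i, sg * r i <= mu * (\sum_j L i j * r j)
       + (p i - 2 * u i - c * v i) * r i + c * u i * t i) ->
  (forall i, sg * t i <= mv * (\sum_j L i j * t j)
       + (q i - b * u i - 2 * v i) * t i + b * v i * r i) ->
  sg <= 0 /\ (sg = 0 -> b * c = 1 /\ exists k, 0 < k /\ forall i, u i = k * v i).
Proof.
move=> Hr Ht [i0 Hi0] HI1 HI2.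
have Heu i : mu * (\sum_j L i j * u j) + u i * (p i - u i - c * v i) = 0.
  by case: (Heq i).
have Hev i : mv * (\sum_j L i j * v j) + v i * (q i - b * u i - v i) = 0.
  by case: (Heq i).
have HI1' i : sg * r i <= mu * (\sum_j L i j * r j)
    + ((p i - u i - c * v i) - u i) * r i + c * u i * t i.
  have -> : p i - u i - c * v i - u i = p i - 2 * u i - c * v i by ring.
  exact: HI1.
have HI2' i : sg * t i <= mv * (\sum_j L i j * t j)
    + ((q i - b * u i - v i) - v i) * t i + b * v i * r i.
  have -> : q i - b * u i - v i - v i = q i - b * u i - 2 * v i by ring.
  exact: HI2.
have H1 := species_ineq Hu Hr Heu HI1'.
have H2 := species_ineq Hv Ht Hev HI2'.
set D1 := Dsum u _ _ in H1; set D2 := Dsum v _ _ in H2.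
have HD1 : D1 <= 0.
  apply: Dsum_le0 => [i|i j]; first exact: ltW.
  by apply: sq_cond; nn.
have HD2 : D2 <= 0.
  apply: Dsum_le0 => [i|i j]; first exact: ltW.
  by apply: sq_cond; nn.
pose P i := (r i - c * t i) ^+ 2 * (r i + c * t i) + (1 - b * c) * c ^+ 2 * r i * t i ^+ 2.
have HP i : 0 <= P i.
  apply: addr_ge0; first by apply: mulr_ge0; [exact: sqr_ge0 | nn].
  have : 0 <= 1 - b * c by rewrite subr_ge0.
  by move=> H; nn.
set S1 := \sum_i _ in H1; set S2 := \sum_i _ in H2.
have HS1 : 0 <= S1.
  by apply: sumr_ge0 => i _; nn.
have HS2 : 0 <= S2.
  by apply: sumr_ge0 => i _; nn.
have Hc3 : 0 < c ^+ 3 by rewrite exprn_gt0.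
have HS : 0 < S1 + c ^+ 3 * S2.
  case: Hi0 => Hne.
    have Hr0 : 0 < r i0 by rewrite lt_def Hne Hr.
    have : 0 < S1.
      rewrite /S1 (bigD1 i0) //= ltr_pwDl ?sumr_ge0 //.
        by rewrite mulr_gt0 ?divr_gt0 ?exprn_gt0.
      by move=> i _; nn.
    by move=> H; rewrite ltr_pwDl //; nn.
  have Ht0 : 0 < t i0 by rewrite lt_def Hne Ht.
  have : 0 < S2.
    rewrite /S2 (bigD1 i0) //= ltr_pwDl ?sumr_ge0 //.
      by rewrite mulr_gt0 ?divr_gt0 ?exprn_gt0.
    by move=> i _; nn.
  by move=> H; rewrite ltr_pwDr // mulr_gt0.
have Hsum : \sum_i th i * (c * r i ^+ 2 * t i - r i ^+ 3)
    + c ^+ 3 * \sum_i th i * (b * t i ^+ 2 * r i - t i ^+ 3)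
    = - \sum_i th i * P i.
  rewrite mulr_sumr -sumrN -big_split /=; apply: eq_bigr => i _.
  by rewrite /P; ring.
have Hsum0 : 0 <= \sum_i th i * P i.
  by apply: sumr_ge0 => i _; nn.
have Hmain : sg * (S1 + c ^+ 3 * S2) <=
    mu * D1 + c ^+ 3 * (mv * D2) - \sum_i th i * P i.
  rewrite -Hsum; nra.
have HmuD1 : mu * D1 <= 0 by rewrite pmulr_rle0.
have HmvD2 : c ^+ 3 * (mv * D2) <= 0 by rewrite pmulr_rle0 // pmulr_rle0.
split.
  by rewrite -(pmulr_lle0 _ HS); lra.
move=> Hsg0; subst sg.
have E1 : mu * D1 = 0 by move: Hmain; rewrite mul0r; lra.
have E2 : c ^+ 3 * (mv * D2) = 0 by move: Hmain; rewrite mul0r; lra.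
have E3 : \sum_i th i * P i = 0 by move: Hmain; rewrite mul0r; lra.
have ED1 : D1 = 0 by move/eqP: E1; rewrite mulf_eq0 (gt_eqF Hmu) /= => /eqP.
have ED2 : D2 = 0 by move/eqP: E2; rewrite mulf_eq0 (gt_eqF Hc3) /= mulf_eq0 (gt_eqF Hmv) /= => /eqP.
have HP0 i : P i = 0.
  have Hthi : th i * P i = 0.
    by apply: (psumr_eq0P _ E3) => // k _; nn.
  by move/eqP: Hthi; rewrite mulf_eq0 (gt_eqF (Hth i)) /= => /eqP.
have Hxi := ratio_const Hu Hr ED1.
have Heta := ratio_const Hv Ht ED2.
have Hunz k : u k != 0 by rewrite gt_eqF.
have Hvnz k : v k != 0 by rewrite gt_eqF.
pose k1 := r i0 / u i0; pose k2 := t i0 / v i0.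
have Hr_eq i : r i = k1 * u i.
  by rewrite /k1 -(Hxi i i0); field; rewrite Hunz.
have Ht_eq i : t i = k2 * v i.
  by rewrite /k2 -(Heta i i0); field; rewrite Hvnz.
have Hsplit i : (r i - c * t i) ^+ 2 * (r i + c * t i) = 0 /\
    (1 - b * c) * c ^+ 2 * r i * t i ^+ 2 = 0.
  have Ha : 0 <= (r i - c * t i) ^+ 2 * (r i + c * t i).
    by apply: mulr_ge0; [exact: sqr_ge0 | nn].
  have Hb' : 0 <= (1 - b * c) * c ^+ 2 * r i * t i ^+ 2.
    have : 0 <= 1 - b * c by rewrite subr_ge0.
    by move=> H; nn.
  have := HP0 i; rewrite /P => /eqP; rewrite paddr_eq0 // => /andP [/eqP -> /eqP ->].
  by [].
have Hrct i : r i = c * t i.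
  have [H _] := Hsplit i.
  move/eqP: H; rewrite mulf_eq0 sqrf_eq0 subr_eq0 => /orP [/eqP //|].
  rewrite paddr_eq0 ?Hr //; last by nn.
  by case/andP => /eqP -> /eqP ->.
have [Hr0 Ht0] : 0 < r i0 /\ 0 < t i0.
  have Hrt : r i0 != 0 /\ t i0 != 0.
    case: Hi0 => H.
      split => //; apply: contraNneq H => H'.
      by rewrite Hrct H' mulr0.
    split => //; rewrite Hrct mulf_neq0 // gt_eqF //.
  by case: Hrt => H1' H2'; split; rewrite lt_def ?H1' ?H2' ?Hr ?Ht.
have Hbc1 : b * c = 1.
  have [_ H] := Hsplit i0.
  have HX : c ^+ 2 * r i0 * t i0 ^+ 2 != 0.
    by rewrite gt_eqF // mulr_gt0 // ?mulr_gt0 // exprn_gt0.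
  have H' : (1 - b * c) * (c ^+ 2 * r i0 * t i0 ^+ 2) = 0 by rewrite -H; ring.
  move/eqP: H'; rewrite mulf_eq0 (negbTE HX) orbF subr_eq0 => /eqP <-.
  by [].
split => //.
have Hk1 : 0 < k1 by rewrite divr_gt0.
have Hk2 : 0 < k2 by rewrite divr_gt0.
exists (c * k2 / k1); split; first by rewrite divr_gt0 // mulr_gt0.
move=> i.
have : k1 * u i = c * (k2 * v i) by rewrite -Hr_eq -Ht_eq Hrct.
move=> H; have Hk1nz : k1 != 0 by rewrite gt_eqF.
by apply: (mulfI Hk1nz); rewrite H; field.
Qed.


Lemma sum_shift (W z : 'I_n -> R) i : (forall k, 0 < W k) ->
  \sum_j L i j * W j * (z j / W j - z i / W i) =
  \sum_j L i j * z j - z i / W i * \sum_j L i j * W j.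
Proof.
move=> HW; rewrite mulr_sumr -sumrB; apply: eq_bigr => j _.
have Hj : W j != 0 by rewrite gt_eqF.
have Hi : W i != 0 by rewrite gt_eqF.
by field; rewrite Hj Hi.
Qed.

Lemma special_prop (i0 : 'I_n) (wu wv : 'I_n -> R) : b * c = 1 ->
  single_pos_equilibrium L mu p wu -> single_pos_equilibrium L mv q wv ->
  (forall i, wu i = c * wv i) ->
  exists k, 0 < k /\ forall i, u i = k * v i.
Proof.
move=> Hbc1 [HW HWe] [Hwv Hwve] HWc.
have Heu i : mu * (\sum_j L i j * u j) + u i * (p i - u i - c * v i) = 0.
  by case: (Heq i).
have Hev i : mv * (\sum_j L i j * v j) + v i * (q i - b * u i - v i) = 0.
  by case: (Heq i).
pose xi i := u i / wu i; pose eta i := v i / wv i.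
pose rho i := xi i + eta i - 1.
have HWnz k : wu k != 0 by rewrite gt_eqF.
have Hwvnz k : wv k != 0 by rewrite gt_eqF.
have Hb' : b = c^-1.
  by rewrite -[c^-1]mul1r -Hbc1 mulfK // gt_eqF.
have E1 i : mu * (\sum_j L i j * wu j * (xi j - xi i)) = u i * wu i * rho i.
  rewrite /xi sum_shift //.
  have e1 := Heu i; have e2 := HWe i.
  have -> : mu * (\sum_j L i j * u j - u i / wu i * \sum_j L i j * wu j)
    = (mu * (\sum_j L i j * u j) + u i * (p i - u i - c * v i))
      - u i / wu i * (mu * (\sum_j L i j * wu j) + wu i * (p i - wu i))
      + u i * (u i + c * v i - wu i).
    by field; rewrite HWnz.
  rewrite e1 e2 mulr0 subr0 add0r /rho /xi /eta (HWc i).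
  by field; rewrite Hwvnz gt_eqF.
have E2 i : mv * (\sum_j L i j * wv j * (eta j - eta i)) = v i * wv i * rho i.
  rewrite /eta sum_shift //.
  have e1 := Hev i; have e2 := Hwve i.
  have -> : mv * (\sum_j L i j * v j - v i / wv i * \sum_j L i j * wv j)
    = (mv * (\sum_j L i j * v j) + v i * (q i - b * u i - v i))
      - v i / wv i * (mv * (\sum_j L i j * wv j) + wv i * (q i - wv i))
      + v i * (b * u i + v i - wv i).
    by field; rewrite Hwvnz.
  rewrite e1 e2 mulr0 subr0 add0r /rho /xi /eta (HWc i) Hb'.
  by field; rewrite Hwvnz gt_eqF.
have HT1 : \sum_i th i * wu i * (u i * wu i * rho i) = 0.
  transitivity (mu * Dsum wu xi (fun=> 1)); last by rewrite Dsum_const mulr0.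
  rewrite /Dsum mulr_sumr.
  by apply: eq_bigr => i _; rewrite -E1; ring.
have HT2 : \sum_i th i * wv i * (v i * wv i * rho i) = 0.
  transitivity (mv * Dsum wv eta (fun=> 1)); last by rewrite Dsum_const mulr0.
  rewrite /Dsum mulr_sumr.
  by apply: eq_bigr => i _; rewrite -E2; ring.
have Hxi k : 0 < xi k by rewrite divr_gt0.
have HT3 : 0 <= \sum_i th i * wu i ^+ 3 * rho i.
  have HD : Dsum wu xi (fun i => - (xi i)^-1) <= 0.
    apply: Dsum_le0 => [k|k l]; first exact: ltW.
    have Hk := Hxi k; have Hl := Hxi l.
    have -> : (xi l - xi k) * (- (xi k)^-1 - - (xi l)^-1)
       = - ((xi l - xi k) ^+ 2 / (xi k * xi l)).
      by field; rewrite !gt_eqF.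
    by rewrite oppr_le0; apply: divr_ge0; [exact: sqr_ge0 | nn].
  have : mu * Dsum wu xi (fun i => - (xi i)^-1) <= 0 by rewrite pmulr_rle0.
  rewrite /Dsum mulr_sumr (eq_bigr (fun i => - (th i * wu i ^+ 3 * rho i))).
    by rewrite sumrN oppr_le0.
  move=> i _; rewrite mulrCA E1 /xi.
  have Hui : u i != 0 by rewrite gt_eqF.
  by field; rewrite Hui HWnz.
have Hsq : \sum_i th i * wu i ^+ 3 * rho i ^+ 2 = - \sum_i th i * wu i ^+ 3 * rho i.
  transitivity (\sum_i th i * wu i * (u i * wu i * rho i)
     + c ^+ 3 * \sum_i th i * wv i * (v i * wv i * rho i)
     - \sum_i th i * wu i ^+ 3 * rho i); last by rewrite HT1 HT2 mulr0 add0r sub0r.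
  rewrite mulr_sumr -big_split -sumrB /=; apply: eq_bigr => i _.
  rewrite /rho /xi /eta (HWc i).
  by field; rewrite Hwvnz gt_eqF.
have Hrho0 i : rho i = 0.
  have H0 : \sum_i th i * wu i ^+ 3 * rho i ^+ 2 = 0.
    apply/eqP; rewrite eq_le; apply/andP; split; first by rewrite Hsq oppr_le0.
    by apply: sumr_ge0 => k _; apply: mulr_ge0; [nn | exact: sqr_ge0].
  have Hi : th i * wu i ^+ 3 * rho i ^+ 2 = 0.
    apply: (psumr_eq0P _ H0) => // k _.
    by apply: mulr_ge0; [nn | exact: sqr_ge0].
  move/eqP: Hi; rewrite mulf_eq0 sqrf_eq0 => /orP [|/eqP //].
  by rewrite mulf_eq0 (gt_eqF (Hth i)) /= expf_eq0 /= (gt_eqF (HW i)).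
have HD0 : Dsum wu xi xi = 0.
  rewrite /Dsum big1 // => i _.
  have : mu * (\sum_j L i j * wu j * (xi j - xi i)) = 0 by rewrite E1 Hrho0 mulr0.
  by move/eqP; rewrite mulf_eq0 (gt_eqF Hmu) /= => /eqP ->; rewrite mulr0.
have Hxic : forall i j, xi i = xi j.
  apply: (const_edges Hoff Hirr) => i j Hij Ha.
  have Hsg k l : (xi l - xi k) * (xi k - xi l) <= 0.
    have -> : (xi l - xi k) * (xi k - xi l) = - ((xi k - xi l) ^+ 2) by ring.
    by rewrite oppr_le0 sqr_ge0.
  have := Dsum_eq0 HW Hsg HD0 Hij Ha.
  have -> : (xi j - xi i) * (xi i - xi j) = - ((xi i - xi j) ^+ 2) by ring.
  by move/eqP; rewrite oppr_eq0 sqrf_eq0 subr_eq0 => /eqP.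
pose k := xi i0.
have Hk : 0 < k := Hxi i0.
have Hk1 : 0 < 1 - k.
  have := Hrho0 i0; rewrite /rho -/k => H.
  have -> : 1 - k = eta i0 by move: H; lra.
  by rewrite divr_gt0.
have Hk1nz : 1 - k != 0 by rewrite gt_eqF.
exists (k * c / (1 - k)); split; first by rewrite divr_gt0 // mulr_gt0.
move=> i.
have Hu_eq : u i = k * wu i.
  by rewrite /k -(Hxic i i0) /xi; field; rewrite HWnz.
have Hv_eq : v i = (1 - k) * wv i.
  have := Hrho0 i; rewrite /rho (Hxic i i0) -/k /eta => H.
  have -> : 1 - k = v i / wv i by move: H; lra.
  by field; rewrite Hwvnz.
rewrite Hu_eq Hv_eq (HWc i).
by field; rewrite Hk1nz.
Qed.

End Energy.

Section Cplx.
Local Open Scope complex_scope.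
Local Open Scope ring_scope.
Variable R : rcfType.
Local Notation nc := (@Normc.normc R).

Lemma nc_ge0 (z : R[i]) : 0 <= nc z.
Proof. by case: z => a b /=; rewrite sqrtr_ge0. Qed.

Lemma nc_real (a : R) : nc (a%:C) = `|a|.
Proof. by rewrite /= expr0n /= addr0 sqrtr_sqr. Qed.

Lemma Re_le_nc (z : R[i]) : complex.Re z <= nc z.
Proof.
case: z => a b /=; apply: le_trans (ler_norm a) _.
rewrite -sqrtr_sqr; apply: ler_wsqrtr.
by rewrite lerDl sqr_ge0.
Qed.

Lemma nc_sum (I : finType) (P : pred I) (F : I -> R[i]) :
  nc (\sum_(i | P i) F i) <= \sum_(i | P i) nc (F i).
Proof.
elim/big_rec2: _ => [|j y1 y2 _ H]; first by rewrite Normc.normc0.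
by apply: le_trans (le_normcD _ _) _; rewrite lerD2l.
Qed.

Lemma row_ineq (n : nat) (lam : R[i]) (a : 'I_n -> R) (x : 'I_n -> R[i]) (s : R[i])
  (i : 'I_n) : (forall j, j != i -> 0 <= a j) ->
  lam * x i = \sum_j (a j)%:C * x j + s ->
  complex.Re lam * nc (x i) <= \sum_j a j * nc (x j) + nc s.
Proof.
move=> Ha E.
have E' : (lam - (a i)%:C) * x i = \sum_(j | j != i) (a j)%:C * x j + s.
  rewrite mulrBl E (bigD1 i) //=; ring.
have H1 : (complex.Re lam - a i) * nc (x i) <= nc ((lam - (a i)%:C) * x i).
  rewrite Normc.normcM; apply: ler_wpM2r; first exact: nc_ge0.
  by case: lam {E E'} => lr li /=; have := Re_le_nc ((lr - a i) +i* (li - 0)).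
have H2 : nc (\sum_(j | j != i) (a j)%:C * x j + s) <=
    \sum_(j | j != i) a j * nc (x j) + nc s.
  apply: le_trans (le_normcD _ _) _; rewrite lerD2r.
  apply: le_trans (nc_sum _ _) _; apply: ler_sum => j Hj.
  by rewrite Normc.normcM nc_real ger0_norm ?Ha.
rewrite (bigD1 i) //=.
move: H1; rewrite E' => H1.
have := le_trans H1 H2; lra.
Qed.

End Cplx.

Lemma eig_tr (F : fieldType) m (Mx : 'M[F]_m) a : eigenvalue Mx a = eigenvalue Mx^T a.
Proof.
rewrite !eigenvalue_root_char /char_poly -det_tr /char_poly_mx.
by rewrite linearB /= tr_scalar_mx map_trmx.
Qed.

Lemma sum_delta (K : pzRingType) m (e : K) (f : 'I_m -> K) i :
  \sum_j (e *+ (i == j)) * f j = e * f i.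
Proof.
rewrite (bigD1 i) //= eqxx mulr1n big1 ?addr0 // => j Hj.
by rewrite eq_sym (negbTE Hj) mulr0n mul0r.
Qed.

Lemma seq_argmax (T : eqType) (R : realDomainType) (f : T -> R) (s : seq T) :
  s != [::] -> exists2 z, z \in s & forall w, w \in s -> f w <= f z.
Proof.
elim: s => [//|a s IH] _.
case: (eqVneq s [::]) => [->|Hs].
  by exists a; rewrite ?inE // => w; rewrite inE => /eqP ->.
have [z Hz Hmax] := IH Hs.
case: (leP (f a) (f z)) => H.
  exists z; first by rewrite inE Hz orbT.
  by move=> w; rewrite inE => /orP [/eqP ->|/Hmax].
exists a; first by rewrite inE eqxx.
move=> w; rewrite inE => /orP [/eqP ->//|/Hmax Hw].
by apply: le_trans Hw (ltW H).
Qed.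

Section Main.
Local Open Scope complex_scope.
Local Open Scope ring_scope.
Variables (R : realType) (n : nat) (A : 'M[R]_n) (th : 'I_n -> R).
Variables (b c mu mv : R) (p q u v : 'I_n -> R).
Hypothesis Hoff : offdiag_nonneg A.
Hypothesis Hth : forall i, 0 < th i.
Hypothesis Hsym : forall i j, th i * A i j = th j * A j i.
Hypothesis Hirr : irreducible_mx (connL A).
Hypotheses (Hb : 0 < b) (Hc : 0 < c) (Hbc : b * c <= 1).
Hypotheses (Hmu : 0 < mu) (Hmv : 0 < mv).
Hypotheses (Hu : forall i, 0 < u i) (Hv : forall i, 0 < v i).
Hypothesis Heq : M_equilibrium (connL A) mu mv b c p q u v.

Local Notation L := (connL A).
Local Notation J := (jacobianM (connL A) mu mv b c p q u v).

Lemma J_ul i j : J (lshift n i) (lshift n j) = mu * L i j + (p i - 2 * u i - c * v i) *+ (i == j).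
Proof. by rewrite /jacobianM block_mxEul !mxE. Qed.
Lemma J_ur i j : J (lshift n i) (rshift n j) = - ((c * u i) *+ (i == j)).
Proof. by rewrite /jacobianM block_mxEur !mxE. Qed.
Lemma J_dl i j : J (rshift n i) (lshift n j) = - ((b * v i) *+ (i == j)).
Proof. by rewrite /jacobianM block_mxEdl !mxE. Qed.
Lemma J_dr i j : J (rshift n i) (rshift n j) = mv * L i j + (q i - b * u i - 2 * v i) *+ (i == j).
Proof. by rewrite /jacobianM block_mxEdr !mxE. Qed.


Lemma sum_deltaC (e : R) (y : 'I_n -> R[i]) i :
  \sum_j (- (e *+ (i == j)))%:C * y j = (- e)%:C * y i.
Proof.
rewrite (bigD1 i) //= eqxx mulr1n big1 ?addr0 // => j Hj.
by rewrite eq_sym (negbTE Hj) mulr0n oppr0 rmorph0 mul0r.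
Qed.

Lemma sum_split_real (m0 e : R) (Li : 'I_n -> R) (r : 'I_n -> R) i :
  \sum_j (m0 * Li j + e *+ (i == j)) * r j = m0 * (\sum_j Li j * r j) + e * r i.
Proof.
rewrite (eq_bigr (fun j => m0 * (Li j * r j) + (e *+ (i == j)) * r j)).
  by rewrite big_split /= -mulr_sumr sum_delta.
by move=> j _; rewrite mulrDl mulrA.
Qed.

Lemma row_nonneg (m0 e : R) i : 0 < m0 ->
  forall j, j != i -> 0 <= m0 * L i j + e *+ (i == j).
Proof.
move=> Hm j Hj; rewrite eq_sym (negbTE Hj) mulr0n addr0.
have Hij : i != j by rewrite eq_sym.
by rewrite connL_off // mulr_ge0 //; [exact: ltW | exact: Hoff Hij].
Qed.

Lemma eig_bound (l : R[i]) : eigenvalue (map_mx (@real_complex R) J) l ->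
  complex.Re l <= 0 /\ (complex.Re l = 0 ->
     b * c = 1 /\ exists k, 0 < k /\ forall i, u i = k * v i).
Proof.
rewrite eig_tr => /eigenvalueP [w Hw Hw0].
have Hrow k : \sum_k' (J k k')%:C * w 0 k' = l * w 0 k.
  move/matrixP: Hw => /(_ 0 k); rewrite !mxE /= => <-.
  by apply: eq_bigr => k' _; rewrite !mxE mulrC.
pose x i := w 0 (lshift n i); pose y i := w 0 (rshift n i).
have Htop i : l * x i =
    \sum_j ((mu * L i j + (p i - 2 * u i - c * v i) *+ (i == j))%:C) * x j
    + \sum_j ((- ((c * u i) *+ (i == j)))%:C) * y j.
  rewrite /x /y -Hrow big_split_ord /=; congr (_ + _).
    by apply: eq_bigr => j _; rewrite J_ul.
  by apply: eq_bigr => j _; rewrite J_ur.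
have Hbot i : l * y i =
    \sum_j ((mv * L i j + (q i - b * u i - 2 * v i) *+ (i == j))%:C) * y j
    + \sum_j ((- ((b * v i) *+ (i == j)))%:C) * x j.
  rewrite /x /y -Hrow big_split_ord /= addrC; congr (_ + _).
    by apply: eq_bigr => j _; rewrite J_dr.
  by apply: eq_bigr => j _; rewrite J_dl.
pose r i := Normc.normc (x i); pose t i := Normc.normc (y i).
have HI1 i : complex.Re l * r i <= mu * (\sum_j L i j * r j)
    + (p i - 2 * u i - c * v i) * r i + c * u i * t i.
  have := row_ineq (row_nonneg (p i - 2 * u i - c * v i) (i := i) Hmu) (Htop i).
  rewrite sum_split_real sum_deltaC Normc.normcM nc_real normrN ger0_norm.
    by [].
  by rewrite mulr_ge0 // ltW.
have HI2 i : complex.Re l * t i <= mv * (\sum_j L i j * t j)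
    + (q i - b * u i - 2 * v i) * t i + b * v i * r i.
  have := row_ineq (row_nonneg (q i - b * u i - 2 * v i) (i := i) Hmv) (Hbot i).
  rewrite sum_split_real sum_deltaC Normc.normcM nc_real normrN ger0_norm.
    by [].
  by rewrite mulr_ge0 // ltW.
have Hwit : exists i, r i != 0 \/ t i != 0.
  have : [exists i, (r i != 0) || (t i != 0)].
    apply: contraT => /existsPn Hall; exfalso; apply: (negP Hw0).
    apply/eqP/rowP => k; rewrite mxE; case: (split_ordP k) => j ->.
      by have := Hall j; rewrite negb_or !negbK => /andP [/eqP H1 _];
         exact: Normc.eq0_normc H1.
    by have := Hall j; rewrite negb_or !negbK => /andP [_ /eqP H2];
       exact: Normc.eq0_normc H2.
  by case/existsP => i /orP [H|H]; exists i; [left|right].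
exact: (core_real Hoff Hth Hsym Hirr Hc Hbc Hmu Hmv Hu Hv Heq
        (fun i => nc_ge0 _) (fun i => nc_ge0 _) Hwit HI1 HI2).
Qed.


Lemma sum_delta_neg (e : R) (f : 'I_n -> R) i :
  \sum_j (- (e *+ (i == j))) * f j = - (e * f i).
Proof.
rewrite -sum_delta -sumrN; apply: eq_bigr => j _; by rewrite mulNr.
Qed.

Lemma sum_split_real' (m0 e : R) (Li : 'I_n -> R) (r : 'I_n -> R) i :
  \sum_j r j * (m0 * Li j + e *+ (i == j)) = m0 * (\sum_j Li j * r j) + e * r i.
Proof.
by rewrite -sum_split_real; apply: eq_bigr => j _; rewrite mulrC.
Qed.

Lemma zero_eig (i0 : 'I_n) : b * c = 1 -> (exists k, 0 < k /\ forall i, u i = k * v i) ->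
  eigenvalue (map_mx (@real_complex R) J) 0.
Proof.
move=> Hbc1 [k [Hk Huv]].
have Heu i : mu * (\sum_j L i j * u j) + u i * (p i - u i - c * v i) = 0.
  by case: (Heq i).
have Hev i : mv * (\sum_j L i j * v j) + v i * (q i - b * u i - v i) = 0.
  by case: (Heq i).
rewrite eig_tr; apply/eigenvalueP.
pose zr : 'rV[R]_(n + n) := row_mx (\row_i (c * u i)) (\row_i (- u i)).
have trE x y : J^T x y = J y x by rewrite mxE.
have Hz : zr *m J^T = 0.
  apply/rowP => kk; rewrite !mxE big_split_ord /=.
  case: (split_ordP kk) => i ->.
    rewrite (eq_bigr (fun j => (c * u j) * (mu * L i j + (p i - 2 * u i - c * v i) *+ (i == j)))); last first.
      by move=> j _; rewrite /zr row_mxEl trE mxE J_ul.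
    rewrite [X in _ + X](eq_bigr (fun j => (- ((c * u i) *+ (i == j))) * (- u j))); last first.
      by move=> j _; rewrite /zr row_mxEr trE mxE J_ur mulrC.
    rewrite sum_split_real' sum_delta_neg.
    have -> : \sum_j L i j * (c * u j) = c * \sum_j L i j * u j.
      by rewrite mulr_sumr; apply: eq_bigr => j _; ring.
    transitivity (c * (mu * (\sum_j L i j * u j) + u i * (p i - u i - c * v i))).
      ring.
    by rewrite Heu mulr0.
  rewrite (eq_bigr (fun j => (- ((b * v i) *+ (i == j))) * (c * u j))); last first.
    by move=> j _; rewrite /zr row_mxEl trE mxE J_dl mulrC.
  rewrite [X in _ + X](eq_bigr (fun j => (- u j) * (mv * L i j + (q i - b * u i - 2 * v i) *+ (i == j)))); last first.
    by move=> j _; rewrite /zr row_mxEr trE mxE J_dr.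
  rewrite sum_delta_neg sum_split_real'.
  have -> : \sum_j L i j * - u j = - (k * \sum_j L i j * v j).
    rewrite mulr_sumr -sumrN; apply: eq_bigr => j _; rewrite Huv; ring.
  have E := Hev i.
  transitivity (- k * (mv * (\sum_j L i j * v j) + v i * (q i - b * u i - v i))
                + k * v i ^+ 2 * (1 - b * c)).
    rewrite (Huv i); ring.
  by rewrite E Hbc1 subrr !mulr0 addr0.
exists (map_mx (@real_complex R) zr).
  by rewrite map_trmx -map_mxM Hz map_mx0 scale0r.
rewrite map_mx_eq0; apply/negP => /eqP /rowP /(_ (lshift n i0)).
rewrite /zr row_mxEl !mxE => /eqP; rewrite mulf_eq0 !gt_eqF //.
Qed.

End Main.

Unset Implicit Arguments.

Theorem theorem3p1 (R : realType) (n : nat) (A : 'M[R]_n) (b c mu_u mu_v : R)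
  (p q u v : 'I_n -> R) :
  (2 <= n)%N ->
  offdiag_nonneg A ->
  (* (A1) *)
  0 < b -> 0 < c -> b * c <= 1 ->
  (forall i, 0 < p i) -> (forall i, 0 < q i) ->
  (* (A2) *)
  irreducible_mx (connL A) ->
  (* (A3) *)
  cycle_balanced A ->
  0 < mu_u -> 0 < mu_v ->
  (forall i, 0 < u i) -> (forall i, 0 < v i) ->
  M_equilibrium (connL A) mu_u mu_v b c p q u v ->
  let J := jacobianM (connL A) mu_u mu_v b c p q u v in
  let special_case :=
    b * c = 1 /\
    exists wu wv : 'I_n -> R,
      [/\ single_pos_equilibrium (connL A) mu_u p wu,
          single_pos_equilibrium (connL A) mu_v q wv &
          forall i, wu i = c * wv i] in
  exists s : R, is_spectral_bound J s /\
    (special_case -> s = 0) /\ (~ special_case -> s < 0).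
Proof.
move=> Hn Hoff Hb Hc Hbc Hp Hq Hirr Hbal Hmu Hmv Hu Hv Heq J special.
have Hn0 : (0 < n)%N by apply: leq_trans Hn.
pose i0 : 'I_n := Ordinal Hn0.
have [th [Hth Hsym]] := theta_ex Hoff Hirr Hbal i0.
have Heig := eig_bound Hoff Hth Hsym Hirr Hb Hc Hbc Hmu Hmv Hu Hv Heq.
have [rs Hrs] := closed_field_poly_normal (char_poly (map_mx (@real_complex R) J)).
have Hlc := monicP (char_poly_monic (map_mx (@real_complex R) J)).
have Heig_rs z : eigenvalue (map_mx (@real_complex R) J) z = (z \in rs).
  by rewrite eigenvalue_root_char Hrs Hlc scale1r root_prod_XsubC.
have Hrs0 : rs != [::].
  apply/eqP => H0; move: (size_char_poly (map_mx (@real_complex R) J)).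
  rewrite Hrs Hlc scale1r H0 big_nil size_poly1 => H1.
  lia.
have [z Hz Hzmax] := seq_argmax (fun z : R[i] => complex.Re z) Hrs0.
have Hze : eigenvalue (map_mx (@real_complex R) J) z by rewrite Heig_rs.
have [Hzle Hz0] := Heig z Hze.
exists (complex.Re z); split; [split|split].
- by exists z.
- by move=> l; rewrite Heig_rs => Hl; exact: Hzmax.
- case=> Hbc1 [wu [wv [H1 H2 H3]]].
  have Hk := special_prop Hoff Hth Hsym Hirr Hc Hmu Hu Hv Heq i0 Hbc1 H1 H2 H3.
  have H0 := zero_eig Hc Hu Heq i0 Hbc1 Hk.
  have : complex.Re (0 : R[i]) <= complex.Re z by apply: Hzmax; rewrite -Heig_rs.
  move=> H; apply/eqP; rewrite eq_le Hzle /=; exact: H.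
- move=> Hns; rewrite lt_neqAle Hzle andbT; apply/eqP => H.
  apply: Hns; have [Hbc1 [k [Hk Huv]]] := Hz0 H.
  split => //.
  have Hknz : k != 0 by rewrite gt_eqF.
  have SU i : \sum_j connL A i j * u j = k * \sum_j connL A i j * v j.
    by rewrite mulr_sumr; apply: eq_bigr => j _; rewrite Huv; ring.
  exists (fun i => u i + c * v i), (fun i => v i + b * u i); split.
  + split => [i|i]; first by rewrite addr_gt0 // mulr_gt0.
    have [E _] := Heq i.
    have Hv' : mu_u * (\sum_j connL A i j * v j) + v i * (p i - u i - c * v i) = 0.
      apply: (mulfI Hknz); rewrite mulr0 -[RHS]E SU (Huv i); ring.
    have -> : \sum_j connL A i j * (u j + c * v j) = (k + c) * \sum_j connL A i j * v j.
      rewrite mulr_sumr; apply: eq_bigr => j _; rewrite Huv; ring.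
    transitivity ((k + c) * (mu_u * (\sum_j connL A i j * v j) + v i * (p i - u i - c * v i))).
      rewrite (Huv i); ring.
    by rewrite Hv' mulr0.
  + split => [i|i]; first by rewrite addr_gt0 // mulr_gt0.
    have [_ E] := Heq i.
    have -> : \sum_j connL A i j * (v j + b * u j) = (1 + b * k) * \sum_j connL A i j * v j.
      rewrite mulr_sumr; apply: eq_bigr => j _; rewrite Huv; ring.
    transitivity ((1 + b * k) * (mu_v * (\sum_j connL A i j * v j) + v i * (q i - b * u i - v i))).
      rewrite (Huv i); ring.
    by rewrite E mulr0.
  + move=> i; rewrite mulrDr mulrA (mulrC c b) Hbc1 mul1r; ring.
Qed.
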